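(* Let $\{\lambda_i\}_{i\ge0}\subset\mathbb R$ and $w(x)=\sum_{i=0}^\infty\lambda_ix^i$ for $x\in\Delta_0=[-1,1]$. The series $w$ converges uniformly on $\Delta_0$ to a function $\widetilde\sigma(x)=\int_{\Delta_1}\frac{d\sigma(t)}{1-tx}$ for some measure $\sigma\in\mathcal M_0(\Delta_1)$ if and only if the restricted Hausdorff moment problem for the sequence $\{\lambda_i\}_{i\in\mathbb Z_+}$ has a solution.
   Context: $\Delta_0=[-1,1]$, $\Delta_1=[0,1]$, $\mathbb Z_+=\{0,1,2,\dots\}$. $\mathcal M(\Delta_1)$ is the set of finite Borel measures on $\Delta_1$ whose support has infinitely many points and which do not change sign. $\mathcal M_0(\Delta_1)$ is the set of $\sigma\in\mathcal M(\Delta_1)$ such that $\lim_{x\to1,\,x\in(0,1)}\left|\int_{\Delta_1}\frac{d\sigma(t)}{1-tx}\right|<+\infty$. The restricted Hausdorff moment problem for a real sequence $\{c_i\}$ asks for $\sigma\in\mathcal M_0(\Delta_1)$ with $c_i=\int t^i\,d\sigma(t)$ for all $i$. *)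

(* Defs.v *)
From HB Require Import structures.
From mathcomp Require Import all_boot all_order all_algebra.
From mathcomp Require Import all_classical all_reals all_analysis.
Set Implicit Arguments. Unset Strict Implicit. Unset Printing Implicit Defensive.
Import Order.TTheory GRing.Theory Num.Theory.
Import numFieldNormedType.Exports.
Local Open Scope classical_set_scope.
Local Open Scope ring_scope.

Section Defs.
Context {R : realType}.

Definition Delta0 : set R := `[-1, 1]%classic.
Definition Delta1 : set R := `[0, 1]%classic.

Definition msupport (mu : set R -> \bar R) : set R :=
  [set x | forall e : R, 0 < e -> (0 < mu (ball x e))%E].

(* A sign-constant finite Borel measure sigma on Delta_1 is represented as
   sigma = s * mu with s = 1 or s = -1 and mu a finite positive Borel measure
   on R concentrated on Delta_1. *)
Definition in_M (s : R) (mu : {finite_measure set R -> \bar R}) : Prop :=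
  (s = 1 \/ s = -1) /\ mu (~` Delta1) = 0%E /\ infinite_set (msupport mu).

Definition sint (s : R) (mu : {finite_measure set R -> \bar R}) (f : R -> R) : R :=
  s * Rintegral mu Delta1 f.

Definition sigma_tilde (s : R) (mu : {finite_measure set R -> \bar R}) (x : R) : R :=
  sint s mu (fun t => (1 - t * x)^-1).

Definition in_M0 (s : R) (mu : {finite_measure set R -> \bar R}) : Prop :=
  in_M s mu /\
  exists L : R, (fun x => `|sigma_tilde s mu x|) @ at_left 1 --> L.

Definition unif_conv_Delta0 (lam : nat -> R) (f : R -> R) : Prop :=
  forall e : R, 0 < e -> exists N : nat, forall n : nat, (N <= n)%N ->
    forall x : R, Delta0 x -> `|\sum_(i < n) lam i * x ^+ i - f x| < e.

Definition restricted_Hausdorff_solvable (c : nat -> R) : Prop :=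
  exists (s : R) (mu : {finite_measure set R -> \bar R}),
    in_M0 s mu /\ forall i : nat, c i = sint s mu (fun t => t ^+ i).

End Defs.

(* Main.v *)
Require Import Defs.
From HB Require Import structures.
From mathcomp Require Import all_boot all_order all_algebra.
From mathcomp Require Import all_classical all_reals all_analysis.
From mathcomp Require Import measurable_realfun.
From mathcomp Require Import ring lra.
Import Order.TTheory GRing.Theory Num.Theory.
Import numFieldNormedType.Exports.
Set Implicit Arguments. Unset Strict Implicit. Unset Printing Implicit Defensive.
Local Open Scope classical_set_scope.
Local Open Scope ring_scope.

Section Alg.
Context {R : realType}.

Lemma geo_id (y : R) n : (\sum_(i < n) y ^+ i) * (1 - y) = 1 - y ^+ n.
Proof.
elim: n => [|n IH]; first by rewrite big_ord0 mul0r expr0 subrr.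
by rewrite big_ord_recr /= mulrDl IH exprS; ring.
Qed.

Lemma geo_diff (y : R) n : y != 1 ->
  \sum_(i < n) y ^+ i - (1 - y)^-1 = - (y ^+ n * (1 - y)^-1).
Proof.
move=> y1; have nz : 1 - y != 0 by rewrite subr_eq0 eq_sym.
have yn : y ^+ n = 1 - (\sum_(i < n) y ^+ i) * (1 - y) by rewrite geo_id; ring.
rewrite yn; field => //.
Qed.

Lemma geo_le (y : R) n : 0 <= y < 1 -> \sum_(i < n) y ^+ i <= (1 - y)^-1.
Proof.
move=> /andP[y0 y1]; have p : 0 < 1 - y by lra.
rewrite -[(1 - y)^-1]div1r ler_pdivlMr // geo_id.
have := exprn_ge0 n y0; lra.
Qed.

Lemma pos_1tx (t x : R) : 0 <= t < 1 -> -1 <= x <= 1 -> 1 - t <= 1 - t * x.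
Proof. move=> /andP[t0 t1] /andP[x0 x1]; nra. Qed.

Lemma pos_1tx' (t x : R) : -1 < t < 1 -> -1 <= x <= 1 -> 0 < 1 - t * x.
Proof.
move=> /andP[t0 t1] /andP[x0 x1].
have [tp|tn] := lerP 0 t; nra.
Qed.

End Alg.
Section Unique.
Context {R : realType}.
Implicit Types d : nat -> R.

Definition Sn d n (x : R) := \sum_(i < n) d i * x ^+ i.

Definition Pw d := (exists M, 0 <= M /\ forall i, `|d i| <= M) /\
  forall x : R, 0 < x -> x <= 2^-1 -> forall e : R, 0 < e ->
    exists N, forall n, (N <= n)%N -> `|Sn d n x| < e.

Lemma Sn_shift d n x : Sn d n.+1 x = d 0%N + x * Sn (fun i => d i.+1) n x.
Proof.
rewrite /Sn big_ord_recl /= expr0 mulr1 mulr_sumr; congr (_ + _).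
by apply: eq_bigr => i _; rewrite exprS mulrCA.
Qed.

Lemma Sn_last d n x : Sn d n.+1 x = Sn d n x + d n * x ^+ n.
Proof. by rewrite /Sn big_ord_recr. Qed.

Lemma geo2 (x : R) : 0 <= x -> x <= 2^-1 -> forall m, \sum_(i < m) x ^+ i <= 2.
Proof.
move=> x0 x2; elim=> [|m IH]; first by rewrite big_ord0; lra.
rewrite big_ord_recl expr0.
under eq_bigr do rewrite exprS.
rewrite -mulr_sumr.
have h : x * \sum_(i < m) x ^+ i <= x * 2 by rewrite ler_wpM2l.
lra.
Qed.

Lemma Sn_bound d M (x : R) n : 0 <= x -> x <= 2^-1 ->
  (forall i, `|d i| <= M) -> `|Sn d n x| <= M * 2.
Proof.
move=> x0 x2 hM.
apply: (le_trans (ler_norm_sum _ _ _)).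
have M0 : 0 <= M by apply: le_trans (hM 0%N).
apply: (@le_trans _ _ (\sum_(i < n) M * x ^+ i)).
  apply: ler_sum => i _; rewrite normrM normrX (ger0_norm x0).
  by rewrite ler_wpM2r // exprn_ge0.
by rewrite -mulr_sumr ler_wpM2l // geo2.
Qed.

Lemma small_le0 (a C : R) : 0 <= C ->
  (forall x e : R, 0 < x -> x <= 2^-1 -> 0 < e -> a <= e + C * x) -> a <= 0.
Proof.
move=> C0 H; apply/ler_addgt0Pr => e e0; rewrite add0r.
have e2 : 0 < e / 2 by rewrite divr_gt0.
pose x := (e / 2) / (C + 1 + e).
have den : 0 < C + 1 + e by lra.
have x0 : 0 < x by rewrite divr_gt0.
have x2 : x <= 2^-1.
  rewrite /x ler_pdivrMr //. lra.
have Cx : C * x <= e / 2.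
  rewrite /x mulrA ler_pdivrMr //.
  have : C * (e / 2) <= e / 2 * (C + 1 + e) by nra.
  by [].
have := H x (e / 2) x0 x2 e2; lra.
Qed.

Lemma normDsub (a b : R) : `|a| <= `|a + b| + `|b|.
Proof. by have := ler_normB (a + b) b; rewrite addrK. Qed.

Lemma Pw_0 d : Pw d -> d 0%N = 0.
Proof.
move=> [[M [M0 hM]] hP].
apply/normr0_eq0/eqP; rewrite eq_le normr_ge0 andbT.
apply: (@small_le0 _ (M * 2)); first lra.
move=> x e x0 x2 e0.
have [N hN] := hP x x0 x2 e e0.
have := hN N.+1 (leqnSn N); rewrite Sn_shift => h.
have hb' : `|Sn (fun i => d i.+1) N x| <= M * 2.
  exact: (@Sn_bound (fun i => d i.+1) M x N (ltW x0) x2 (fun i => hM i.+1)).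
have := normDsub (d 0%N) (x * Sn (fun i => d i.+1) N x).
rewrite normrM (gtr0_norm x0).
have : x * `|Sn (fun i => d i.+1) N x| <= x * (M * 2) by rewrite ler_wpM2l // ltW.
lra.
Qed.

Lemma Pw_shift d : Pw d -> Pw (fun i => d i.+1).
Proof.
move=> Pd; have d0 := Pw_0 Pd; move: Pd => [[M [M0 hM]] hP]; split.
  by exists M; split.
move=> x x0 x2 e e0.
have [N hN] := hP x x0 x2 (e * x) (mulr_gt0 e0 x0).
exists N => n Nn.
have := hN n.+1 (leqW Nn); rewrite Sn_shift d0 add0r normrM (gtr0_norm x0).
by rewrite [e * x]mulrC ltr_pM2l.
Qed.

Lemma Pw_all d : Pw d -> forall k, d k = 0.
Proof.
move=> Pd.
have H : forall k, Pw (fun i => d (k + i)%N).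
  elim=> [|k IH].
    by have -> : (fun i => d (0 + i)%N) = d by apply/funext => i; rewrite add0n.
  have -> : (fun i => d (k.+1 + i)%N) = (fun i => (fun j => d (k + j)%N) i.+1).
    by apply/funext => i /=; rewrite addSn addnS.
  exact: (Pw_shift IH).
by move=> k; have := Pw_0 (H k); rewrite addn0.
Qed.

Lemma bounded_prefix d N : exists M, 0 <= M /\ forall n, (n < N)%N -> `|d n| <= M.
Proof.
elim: N => [|N [M [M0 hM]]]; first by exists 0; split.
exists (M + `|d N|); split; first by rewrite addr_ge0.
move=> n; rewrite ltnS leq_eqVlt => /predU1P[->|nN].
  by rewrite lerDr.
by apply: le_trans (hM n nN) _; rewrite lerDl.
Qed.

Lemma unif_Pw d :
  (forall e : R, 0 < e -> exists N, forall n, (N <= n)%N ->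
     forall x : R, Delta0 x -> `|Sn d n x| < e) -> Pw d.
Proof.
move=> H; split.
  have [N1 hN1] := H 1 ltr01.
  have [M [M0 hM]] := bounded_prefix d N1.
  exists (M + 2); split; first lra.
  have D1 : Delta0 (1 : R) by rewrite /Delta0 /= in_itv /=; apply/andP; split; lra.
  move=> n; have [nN|Nn] := ltnP n N1.
    by have := hM n nN; lra.
  have h1 := hN1 n.+1 (leqW Nn) 1 D1.
  have h2 := hN1 n Nn 1 D1.
  move: h1; rewrite Sn_last expr1n mulr1 => h1.
  have := normDsub (d n) (Sn d n 1); rewrite (addrC (d n)); lra.
move=> x x0 x2 e e0; have [N hN] := H e e0; exists N => n Nn; apply: hN => //.
rewrite /Delta0 /= in_itv /=; apply/andP; split; lra.
Qed.

End Unique.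
Section Meas.
Context {R : realType} (mu : {finite_measure set R -> \bar R}).

Definition E0 : set R := `[0, 1[.
Definition hx (x t : R) : R := (1 - t * x)^-1.
Definition gg (t : R) : R := (1 - t)^-1.
Definition pn n (t : R) : R := \sum_(i < n) t ^+ i.
Definition qn n (x t : R) : R := \sum_(i < n) (t * x) ^+ i.

Lemma mE0 : measurable E0.
Proof. exact: measurable_itv. Qed.

Lemma E0P t : E0 t <-> 0 <= t < 1.
Proof. by rewrite /E0 /= in_itv. Qed.

Lemma D1_split : Delta1 = E0 `|` [set 1].
Proof.
apply/seteqP; split => t /=.
  rewrite /Delta1 /= in_itv /= => /andP[t0 t1].
  have [->|t1'] := eqVneq t 1; first by right.
  by left; rewrite E0P t0 /= lt_neqAle t1' t1.
rewrite /Delta1 /= in_itv /=; case.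
  by move/E0P => /andP[t0 t1]; rewrite t0 ltW.
by move=> ->; rewrite ler01 lexx.
Qed.

Lemma E0_disj : [disjoint E0 & [set (1:R)]].
Proof.
apply/disj_setPS => t [/E0P /andP[_ t1] /= t1']; move: t1; rewrite t1' ltxx //.
Qed.

Lemma mfE (f : R -> R) : {in `]-1, 1[, continuous f} -> measurable_fun E0 f.
Proof.
move=> cf; apply: (measurable_funS (E := (`]-1, 1[%classic : set R))).
- exact: measurable_itv.
- move=> t /E0P /andP[t0 t1]; rewrite /= in_itv /=; apply/andP; split => //; lra.
- apply: open_continuous_measurable_fun => // t /set_mem ht; exact: cf.
Qed.

Lemma mf_hx x : -1 <= x <= 1 -> measurable_fun E0 (hx x).
Proof.
move=> hx1; apply: mfE => t; rewrite in_itv /= => ht.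
rewrite /hx; apply: (@continuousV R R (fun t0 => 1 - t0 * x)).
  by rewrite gt_eqF // pos_1tx'.
apply: cvgB; first exact: cvg_cst.
apply: cvgMl; exact: cvg_id.
Qed.

Lemma mf_gg : measurable_fun E0 gg.
Proof.
have -> : gg = hx 1 by apply/funext => t; rewrite /gg /hx mulr1.
by apply: mf_hx; rewrite lexx andbT; lra.
Qed.

Lemma mf_pn n : measurable_fun E0 (pn n).
Proof.
rewrite /pn; apply: measurable_sum => i.
exact: measurable_funX.
Qed.

Lemma mf_qn n x : measurable_fun E0 (qn n x).
Proof.
rewrite /qn; apply: measurable_sum => i.
apply: measurable_funX; apply: measurable_funM => //.
Qed.

Lemma int_bnd (D : set R) (f : R -> R) (M : R) : measurable D -> measurable_fun D f ->
  (forall t, D t -> `|f t| <= M) -> mu.-integrable D (EFin \o f).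
Proof.
move=> mD mf hM.
apply: (@le_integrable _ _ _ mu D mD _ (EFin \o cst M)).
- exact/measurable_EFinP.
- move=> t Dt /=; rewrite lee_fin.
  exact: le_trans (hM t Dt) (ler_norm M).
- exact: finite_measure_integrable_cst.
Qed.

Lemma int_dom (D : set R) (f h : R -> R) : measurable D -> measurable_fun D f ->
  (forall t, D t -> `|f t| <= h t) -> mu.-integrable D (EFin \o h) ->
  mu.-integrable D (EFin \o f).
Proof.
move=> mD mf hb ih.
apply: (@le_integrable _ _ _ mu D mD _ (EFin \o h)) => //.
- exact/measurable_EFinP.
- move=> t Dt /=; rewrite lee_fin.
  exact: le_trans (hb t Dt) (ler_norm _).
Qed.

Lemma drop1 (f : R -> R) : mu [set 1] = 0%E -> measurable_fun E0 f ->
  Rintegral mu Delta1 f = Rintegral mu E0 f.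
Proof.
move=> m1 mf; rewrite /Rintegral D1_split integral_setU //; last 3 first.
- exact: mE0.
- apply/measurable_funU => //; first exact: mE0.
  split; [exact/measurable_EFinP | exact: measurable_fun_set1].
- exact: E0_disj.
rewrite [X in (_ + X)%E](eq_integral (cst (f 1)%:E)); last by move=> t; rewrite inE /= => ->.
rewrite integral_cst //. match goal with |- context[(_ * ?M)%E] => set MM := M end. 
have -> : MM = 0%E by exact: m1.
by rewrite mule0 adde0.
Qed.

End Meas.
Section M0.
Context {R : realType} (mu : {finite_measure set R -> \bar R}).

Lemma mD1 : measurable (Delta1 : set R).
Proof. exact: measurable_itv. Qed.

Lemma D1P (t : R) : Delta1 t <-> 0 <= t <= 1.
Proof. by rewrite /Delta1 /= in_itv. Qed.

Lemma hx_pos (x t : R) : 0 <= x < 1 -> Delta1 t -> 1 - x <= 1 - t * x.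
Proof. move=> /andP[x0 x1] /D1P /andP[t0 t1]; nra. Qed.

Lemma hx_bnd (x t : R) : 0 <= x < 1 -> Delta1 t -> 0 <= hx x t <= (1 - x)^-1.
Proof.
move=> hxx ht; have := hx_pos hxx ht; move: hxx => /andP[x0 x1] h.
have p1 : 0 < 1 - x by lra.
have p2 : 0 < 1 - t * x by lra.
rewrite /hx invr_ge0 (ltW p2) /= lef_pV2 //.
Qed.

Lemma mf_hx_D1 (x : R) : 0 <= x < 1 -> measurable_fun Delta1 (hx x).
Proof.
move=> /andP[x0 x1]; rewrite D1_split; apply/measurable_funU => //.
  exact: mE0.
split; last exact: measurable_fun_set1.
by apply: mf_hx; apply/andP; split; lra.
Qed.

Lemma int_hx_D1 (x : R) : 0 <= x < 1 -> mu.-integrable Delta1 (EFin \o hx x).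
Proof.
move=> hxx; apply: (@int_bnd _ mu _ _ ((1 - x)^-1)).
- exact: mD1.
- exact: mf_hx_D1.
- move=> t ht; have /andP[h0 h1] := hx_bnd hxx ht.
  by rewrite ger0_norm.
Qed.

Lemma norm_st (s x : R) : (s = 1 \/ s = -1) -> 0 <= x < 1 ->
  `|sigma_tilde s mu x| = Rintegral mu Delta1 (hx x).
Proof.
move=> hs hxx.
have ns : `|s| = 1 by case: hs => ->; rewrite ?normrN normr1.
rewrite /sigma_tilde /sint normrM ns mul1r ger0_norm //.
apply: Rintegral_ge0 => t ht.
by have /andP[] := hx_bnd hxx ht.
Qed.

Lemma mu1_bound (x : R) : 0 <= x < 1 ->
  (1 - x)^-1 * fine (mu [set 1]) <= Rintegral mu Delta1 (hx x).
Proof.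
move=> hxx; have := int_hx_D1 hxx; rewrite D1_split => hi.
rewrite (Rintegral_setU mE0 (measurable_set1 1) hi E0_disj).
rewrite [X in _ <= _ + X](@eq_Rintegral _ _ _ mu _ (fun=> (1 - x)^-1)); last first.
  by move=> t; rewrite inE /= => ->; rewrite /hx mul1r.
rewrite Rintegral_cst; last exact: measurable_set1.
rewrite lerDr; apply: Rintegral_ge0 => t /E0P /andP[t0 t1].
have := @hx_bnd x t hxx; rewrite D1P t0 ltW //= => /(_ isT) /andP[] //.
Qed.

End M0.
Section M0b.
Context {R : realType} (mu : {finite_measure set R -> \bar R}).

Lemma st_near (s : R) : in_M0 s mu -> exists L : R, 0 < L /\
  \forall x \near at_left (1:R), 0 < x /\ x < 1 /\ `|sigma_tilde s mu x| < L.
Proof.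
move=> [_ [L hL]]; exists (`|L| + 1); split; first by have := normr_ge0 L; lra.
have hL1 := cvgr_dist_lt _ _ hL _ ltr01.
near=> x; split; [|split].
- near: x; exact: nbhs_left_gt ltr01.
- near: x; exact: nbhs_left_lt.
- have : `|L - `|sigma_tilde s mu x| | < 1.
    by near: x; exact: hL1.
  have := ler_norm (`|sigma_tilde s mu x| - L); rewrite distrC.
  have := ler_norm L; lra.
Unshelve. all: by end_near. Qed.

Lemma mu1_0 (s : R) : in_M0 s mu -> mu [set 1] = 0%E.
Proof.
move=> h0; have hs := h0.1.1.
have [L [L0 hN]] := st_near h0.
set m := fine (mu [set 1]).
have fin1 : mu [set 1] \is a fin_num by apply: fin_num_measure; exact: measurable_set1.
have m0 : 0 <= m by apply: fine_ge0; exact: measure_ge0.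
suff mle : m <= 0.
  have m00 : m = 0 by apply/eqP; rewrite eq_le mle m0.
  by rewrite -(fineK fin1) -/m m00.
apply/ler_addgt0Pr => e e0; rewrite add0r.
have eL : 0 < e / L by rewrite divr_gt0.
have hN2 : \forall x \near at_left (1:R),
    (0 < x /\ x < 1 /\ `|sigma_tilde s mu x| < L) /\ 1 - e / L < x.
  near=> x; split; first by near: x; exact: hN.
  by near: x; apply: nbhs_left_gt; lra.
have [x [[x0 [x1 xL]] xe]] := filter_ex hN2.
have hxx : 0 <= x < 1 by rewrite (ltW x0) x1.
have := mu1_bound mu hxx; rewrite -(norm_st mu hs hxx) -/m => hb.
have p1 : 0 < 1 - x by lra.
have mw : m = (1 - x) * ((1 - x)^-1 * m) by rewrite mulrA mulfV ?mul1r // gt_eqF.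
have qL : e / L * L = e by rewrite divfK // gt_eqF.
set w := (1 - x)^-1 * m in mw hb.
set S := `|sigma_tilde s mu x| in hb xL.
set q := e / L in eL xe qL.
nra.
Unshelve. all: by end_near. Qed.

Lemma pn_ge0 n (t : R) : 0 <= t -> 0 <= pn n t.
Proof. by move=> t0; apply: sumr_ge0 => i _; exact: exprn_ge0. Qed.

Lemma pn_S n (t : R) : pn n.+1 t = pn n t + t ^+ n.
Proof. by rewrite /pn big_ord_recr. Qed.

Lemma pn_le n (t : R) : 0 <= t <= 1 -> pn n t <= n%:R.
Proof.
move=> /andP[t0 t1]; elim: n => [|n IH]; first by rewrite /pn big_ord0.
rewrite pn_S -natr1; have := exprn_ile1 n t0 t1; lra.
Qed.

Lemma int_pn n : mu.-integrable E0 (EFin \o pn n).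
Proof.
apply: (@int_bnd _ mu _ _ n%:R); [exact: mE0 | exact: mf_pn |].
move=> t /E0P /andP[t0 t1]; rewrite ger0_norm ?pn_ge0 //.
by apply: pn_le; rewrite t0 ltW.
Qed.

Lemma int_hx_E0 (x : R) : 0 <= x < 1 -> mu.-integrable E0 (EFin \o hx x).
Proof.
move=> hxx; have /andP[x0 x1] := hxx.
apply: (@int_bnd _ mu _ _ ((1 - x)^-1)); [exact: mE0 | |].
  by apply: mf_hx; apply/andP; split; lra.
move=> t /E0P /andP[t0 t1].
have /andP[h0 h1] := @hx_bnd _ x t hxx (proj2 (D1P t) (introT andP (conj t0 (ltW t1)))).
by rewrite ger0_norm.
Qed.

Lemma pn_bound (s : R) : in_M0 s mu -> mu [set 1] = 0%E ->
  exists B, forall n, Rintegral mu E0 (pn n) <= B.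
Proof.
move=> h0 m1; have hs := h0.1.1; have [L [L0 hN]] := st_near h0.
exists (2 * L) => n.
have cx : (fun x : R => x ^+ n) @ at_left (1:R) --> (1:R) ^+ n.
  by apply: cvg_at_left_filter; exact: exprn_continuous.
have hN2 : \forall x \near at_left (1:R),
    (0 < x /\ x < 1 /\ `|sigma_tilde s mu x| < L) /\ `|1 ^+ n - x ^+ n| < 2^-1.
  near=> x; split; first by near: x; exact: hN.
  by near: x; apply: (cvgr_dist_lt _ _ cx (2^-1)); lra.
have [x [[x0 [x1 xL]] xn]] := filter_ex hN2.
have hxx : 0 <= x < 1 by rewrite (ltW x0) x1.
rewrite expr1n in xn.
have xn2 : 2^-1 < x ^+ n.
  by have := ler_norm (1 - x ^+ n); lra.
have P0 : 0 <= Rintegral mu E0 (pn n).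
  by apply: Rintegral_ge0 => t /E0P /andP[t0 _]; exact: pn_ge0.
have key : x ^+ n * Rintegral mu E0 (pn n) <= `|sigma_tilde s mu x|.
  rewrite (norm_st mu hs hxx) (drop1 m1); last by apply: mf_hx; apply/andP; split; lra.
  rewrite -RintegralZl; [|exact: mE0|exact: int_pn].
  apply: le_Rintegral; [exact: mE0| |exact: int_hx_E0|].
    apply: (@int_bnd _ mu _ _ (x ^+ n * n%:R)); [exact: mE0| |].
      by apply: measurable_funM => //; exact: mf_pn.
    move=> t /E0P /andP[t0 t1]; rewrite ger0_norm ?mulr_ge0 ?exprn_ge0 ?pn_ge0 ?(ltW x0) //.
    by rewrite ler_wpM2l ?exprn_ge0 ?(ltW x0) // pn_le // t0 ltW.
  move=> t /E0P /andP[t0 t1].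
  rewrite /pn mulr_sumr.
  apply: (@le_trans _ _ (\sum_(i < n) (t * x) ^+ i)).
    apply: ler_sum => i _; rewrite exprMn mulrC ler_wpM2l ?exprn_ge0 //.
    by apply: ler_wiXn2l; [exact: ltW|exact: ltW|exact: ltnW].
  by apply: geo_le; apply/andP; split; [rewrite mulr_ge0 // ltW | nra].
set P := Rintegral mu E0 (pn n) in P0 key *.
set S := `|sigma_tilde s mu x| in xL key.
nra.
Unshelve. all: by end_near. Qed.

End M0b.
Section MCT.
Context {R : realType} (mu : {finite_measure set R -> \bar R}).
Local Open Scope ereal_scope.

Lemma pn_cvg (t : R) : E0 t -> (fun n => (pn n t)%:E) @ \oo --> (gg t)%:E.
Proof.
move=> /E0P /andP[t0 t1].
apply: cvg_EFin; first exact: nearW.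
have tl : (`|t| < 1)%R by rewrite ger0_norm.
have := @cvg_geometric_series R 1%R t tl.
have -> : series (geometric 1%R t) = (fun n => pn n t).
  apply/funext => n; rewrite /series /= /pn big_mkord.
  by apply: eq_bigr => i _; rewrite /geometric /= mul1r.
by rewrite div1r.
Qed.

Lemma mct_gg (s : R) : in_M0 s mu ->
  mu.-integrable E0 (EFin \o gg) /\
  (fun n => Rintegral mu E0 (pn n)) @ \oo --> Rintegral mu E0 gg.
Proof.
move=> h0; have m1 := mu1_0 h0; have [B hB] := pn_bound h0 m1.
have h1 : forall n : nat, measurable_fun (E0 : set R) (fun t : R => (pn n t)%:E).
  by move=> n; apply/measurable_EFinP; exact: mf_pn.
have h2 : forall (n : nat) (t : R), E0 t -> 0 <= (pn n t)%:E.
  by move=> n t /E0P /andP[t0 _]; rewrite lee_fin pn_ge0.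
have h3 : forall t : R, E0 t -> {homo (fun n => (pn n t)%:E) : n m / (n <= m)%N >-> n <= m}.
  move=> t /E0P /andP[t0 _]; apply/nondecreasing_seqP => n.
  by rewrite lee_fin pn_S lerDl exprn_ge0.
have mct := @cvg_monotone_convergence _ _ _ mu E0 mE0 (fun n t => (pn n t)%:E) h1 h2 h3.
have eqI : \int[mu]_(x in E0) limn ((fun n t => (pn n t)%:E)^~ x) =
           \int[mu]_(x in E0) (gg x)%:E.
  apply: eq_integral => t /set_mem Et.
  by apply/cvg_lim => //; exact: pn_cvg.
rewrite eqI in mct.
have fn n : \int[mu]_(x in E0) (pn n x)%:E = (Rintegral mu E0 (pn n))%:E.
  by rewrite fineK // (integrable_fin_num mE0 (int_pn mu n)).
have bnd : \int[mu]_(x in E0) (gg x)%:E <= B%:E.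
  rewrite -(cvg_lim _ mct) //; apply: lime_le; first by apply/cvg_ex; eexists; exact: mct.
  by apply: nearW => n; rewrite fn lee_fin.
have ig : mu.-integrable E0 (EFin \o gg).
  apply/integrableP; split; first by apply/measurable_EFinP; exact: mf_gg.
  rewrite (eq_integral (fun x => (gg x)%:E)); last first.
    move=> t /set_mem /E0P /andP[t0 t1]; rewrite gee0_abs //.
    by rewrite /comp lee_fin /gg invr_ge0 subr_ge0 ltW.
  exact: (le_lt_trans bnd (ltey _)).
split => //.
have ig' : mu.-integrable E0 (fun x => (gg x)%:E) := ig.
rewrite -(fineK (integrable_fin_num mE0 ig')) in mct.
exact: (fine_cvg mct).
Qed.

End MCT.
Section Key.
Context {R : realType} (mu : {finite_measure set R -> \bar R}).

Definition cc (s : R) (n : nat) : R := sint s mu (fun t => t ^+ n).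

Lemma hx_le_gg (x t : R) : -1 <= x <= 1 -> E0 t -> 0 < hx x t <= gg t.
Proof.
move=> hx1 /E0P ht; have := pos_1tx ht hx1; move: ht => /andP[t0 t1] h.
have p1 : 0 < 1 - t by lra.
have p2 : 0 < 1 - t * x by lra.
rewrite /hx /gg invr_gt0 p2 /= lef_pV2 //.
Qed.

Lemma int_hx_dom (x : R) : -1 <= x <= 1 -> mu.-integrable E0 (EFin \o gg) ->
  mu.-integrable E0 (EFin \o hx x).
Proof.
move=> hx1 ig; apply: (@int_dom _ mu _ _ gg mE0 (mf_hx hx1)) => // t Et.
by have /andP[h0 h1] := hx_le_gg hx1 Et; rewrite gtr0_norm.
Qed.

Lemma mf_txn (x : R) n : measurable_fun E0 (fun t : R => (t * x) ^+ n).
Proof. by apply: measurable_funX; apply: measurable_funM. Qed.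

Lemma int_txn (x : R) n : -1 <= x <= 1 -> mu.-integrable E0 (EFin \o (fun t : R => (t * x) ^+ n)).
Proof.
move=> /andP[x0 x1]; apply: (@int_bnd _ mu _ _ 1); [exact: mE0|exact: mf_txn|].
move=> t /E0P /andP[t0 t1]; rewrite normrX exprn_ile1 //.
rewrite normrM ger0_norm //.
have : `|x| <= 1 by rewrite ler_norml; apply/andP; split.
move=> hx; have : t * `|x| <= 1 * 1 by apply: ler_pM => //; lra.
by rewrite mulr1.
Qed.

Lemma int_qn n (x : R) : -1 <= x <= 1 -> mu.-integrable E0 (EFin \o qn n x).
Proof.
move=> hx1; apply: (@int_bnd _ mu _ _ n%:R); [exact: mE0|exact: mf_qn|].
move=> t Et; rewrite /qn; apply: le_trans (ler_norm_sum _ _ _) _.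
apply: le_trans (@ler_sum _ _ _ _ _ (fun=> 1) _) _.
  move=> i _; have := @int_txn x i hx1; move: hx1 => /andP[x0 x1].
  move: Et => /E0P /andP[t0 t1] _.
  rewrite normrX exprn_ile1 // normrM ger0_norm //.
  have : `|x| <= 1 by rewrite ler_norml; apply/andP; split.
  move=> hx; have : t * `|x| <= 1 * 1 by apply: ler_pM => //; lra.
  by rewrite mulr1.
by rewrite sumr_const card_ord.
Qed.

Lemma qn_S n (x t : R) : qn n.+1 x t = qn n x t + (t * x) ^+ n.
Proof. by rewrite /qn big_ord_recr. Qed.

Lemma Sc_eq (s : R) n (x : R) : mu [set 1] = 0%E -> -1 <= x <= 1 ->
  \sum_(i < n) cc s i * x ^+ i = s * Rintegral mu E0 (qn n x).
Proof.
move=> m1 hx1; elim: n => [|n IH].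
  rewrite big_ord0 (@eq_Rintegral _ _ _ mu _ (fun=> 0)); last by move=> t _; rewrite /qn big_ord0.
  by rewrite Rintegral_cst ?mul0r ?mulr0 //; exact: mE0.
rewrite big_ord_recr /= IH.
have -> : Rintegral mu E0 (qn n.+1 x) =
    Rintegral mu E0 (qn n x) + Rintegral mu E0 (fun t => (t * x) ^+ n).
  rewrite -RintegralD; [|exact: mE0|exact: int_qn|exact: int_txn].
  by apply: eq_Rintegral => t _; exact: qn_S.
have -> : cc s n * x ^+ n = s * Rintegral mu E0 (fun t => (t * x) ^+ n).
  rewrite /cc /sint (drop1 m1); last exact: measurable_funX.
  rewrite -mulrA -RintegralZr; first last.
  - apply: (@int_bnd _ mu _ _ 1); [exact: mE0|exact: measurable_funX|].
    move=> t /E0P /andP[t0 t1]; rewrite normrX exprn_ile1 // ger0_norm //; exact: ltW.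
  - exact: mE0.
  by congr (_ * _); apply: eq_Rintegral => t _; rewrite exprMn.
by rewrite mulrDr.
Qed.

Lemma st_eq (s x : R) : mu [set 1] = 0%E -> -1 <= x <= 1 ->
  sigma_tilde s mu x = s * Rintegral mu E0 (hx x).
Proof.
move=> m1 hx1; change (s * Rintegral mu Delta1 (hx x) = s * Rintegral mu E0 (hx x)).
by rewrite (drop1 m1 (mf_hx hx1)).
Qed.

Lemma key_bound (s : R) n (x : R) : in_M0 s mu -> -1 <= x <= 1 ->
  `|\sum_(i < n) cc s i * x ^+ i - sigma_tilde s mu x| <=
  Rintegral mu E0 gg - Rintegral mu E0 (pn n).
Proof.
move=> h0 hx1; have m1 := mu1_0 h0; have hs := h0.1.1.
have [ig _] := mct_gg h0.
have ns : `|s| = 1 by case: hs => ->; rewrite ?normrN normr1.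
rewrite (Sc_eq _ _ m1 hx1) (st_eq _ m1 hx1) -mulrBr normrM ns mul1r.
rewrite -RintegralB; [|exact: mE0|exact: ig|exact: int_pn].
rewrite -RintegralB; [|exact: mE0|by apply: int_qn|by apply: int_hx_dom].
have pw : forall t : R, E0 t -> `|qn n x t - hx x t| <= gg t - pn n t.
  move=> t Et; have /andP[h0' h1'] := hx_le_gg hx1 Et.
  move: (Et) => /E0P ht; have := pos_1tx ht hx1; move: ht => /andP[t0 t1] hp.
  have p2 : 0 < 1 - t * x by lra.
  have ne1 : t * x != 1 by apply/eqP => e; move: p2; rewrite e subrr ltxx.
  have nt1 : t != 1 by rewrite lt_eqF.
  rewrite /qn /hx geo_diff // normrN normrM.
  have -> : gg t - pn n t = t ^+ n * (1 - t)^-1.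
    have := geo_diff n nt1; rewrite /gg /pn; lra.
  have a1 : `|(t * x) ^+ n| <= t ^+ n.
    rewrite normrX normrM (ger0_norm t0) exprMn.
    have : `|x| ^+ n <= 1.
      apply: exprn_ile1 => //; rewrite ler_norml; move: hx1 => /andP[? ?].
      by apply/andP; split.
    have := exprn_ge0 n t0; nra.
  have a2 : `|(1 - t * x)^-1| <= (1 - t)^-1 by rewrite gtr0_norm.
  by apply: ler_pM => //; exact: normr_ge0.
have pw2 : forall t : R, E0 t -> 0 <= gg t - pn n t <= gg t.
  move=> t Et; have := pw t Et; have := normr_ge0 (qn n x t - hx x t).
  move: Et => /E0P /andP[t0 _]; have := pn_ge0 n t0; lra.
have iB : mu.-integrable E0 (EFin \o (fun t => qn n x t - hx x t)).
  apply: (@int_dom _ mu _ _ gg mE0) => //.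
    by apply: measurable_funB; [exact: mf_qn|exact: mf_hx].
  move=> t Et; have := pw t Et; have := pw2 t Et; lra.
apply: le_trans (le_normr_Rintegral mE0 iB) _.
apply: le_Rintegral => //; first exact: mE0.
- apply: (@int_dom _ mu _ _ gg mE0) => //.
    apply: measurableT_comp; first exact: normr_measurable.
    by apply: measurable_funB; [exact: mf_qn|exact: mf_hx].
  move=> t Et; rewrite normr_id; have := pw t Et; have := pw2 t Et; lra.
- apply: (@int_dom _ mu _ _ gg mE0) => //.
    by apply: measurable_funB; [exact: mf_gg|exact: mf_pn].
  move=> t Et; have := pw2 t Et; move=> /andP[a b]; rewrite ger0_norm //.
Qed.

Lemma KEY (s : R) : in_M0 s mu -> unif_conv_Delta0 (cc s) (sigma_tilde s mu).
Proof.
move=> h0 e e0; have [ig cv] := mct_gg h0.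
have [N _ hN] := cvgr_dist_lt _ _ cv _ e0.
exists N => n Nn x; rewrite /Delta0 /= in_itv /= => hx1.
apply: le_lt_trans (key_bound n h0 hx1) _.
exact: le_lt_trans (ler_norm _) (hN n Nn).
Qed.

End Key.

Local Close Scope classical_set_scope.
Unset Implicit Arguments.

Theorem lemma2p2 (R : realType) (lam : nat -> R) :
  (exists (s : R) (mu : {finite_measure set R -> \bar R}),
      in_M0 s mu /\ unif_conv_Delta0 lam (sigma_tilde s mu))
  <-> restricted_Hausdorff_solvable lam.
Proof.
split.
- move=> [s [mu [h0 hu]]]; exists s, mu; split => // i.
  have hk := KEY h0.
  pose d := fun i => lam i - cc mu s i.
  suff : forall k, d k = 0.
    by move/(_ i); rewrite /d => /eqP; rewrite subr_eq0 => /eqP.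
  apply: Pw_all; apply: unif_Pw => e e0.
  have e2 : 0 < e / 2 by rewrite divr_gt0.
  have [N1 h1] := hu _ e2; have [N2 h2] := hk _ e2.
  exists (maxn N1 N2) => n Nn x Dx.
  have := h1 n (leq_trans (leq_maxl _ _) Nn) x Dx.
  have := h2 n (leq_trans (leq_maxr _ _) Nn) x Dx.
  have -> : Sn d n x = (\sum_(i < n) lam i * x ^+ i - sigma_tilde s mu x)
      - (\sum_(i < n) cc mu s i * x ^+ i - sigma_tilde s mu x).
    rewrite /Sn /d; under eq_bigr do rewrite mulrBl.
    rewrite sumrB; ring.
  move=> a b; have := ler_normB (\sum_(i < n) lam i * x ^+ i - sigma_tilde s mu x)
      (\sum_(i < n) cc mu s i * x ^+ i - sigma_tilde s mu x).
  have : e / 2 + e / 2 = e by field.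
  lra.
- move=> [s [mu [h0 hc]]]; exists s, mu; split => //.
  have -> : lam = cc mu s by apply/funext => i; rewrite hc.
  exact: KEY.
Qed.
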